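(* Let $x_1,\dots,x_n$ be observations, $\Theta\subset\mathbb{R}^{N_\theta}$, and $g(x,\theta)\in\mathbb{R}^{N_g}$ a moment function; write $g_i=g(x_i,\theta)$ and $\hat g=n^{-1}\sum_i g_i$. The exponentially tilted empirical likelihood (ETEL) estimator $\hat\theta_{\mathrm{ETEL}}$ maximizes the objective function $$\ln\hat L(\theta)=-\ln\Big(n^{-1}\sum_i\exp\big(\hat\lambda'(g_i-\hat g)\big)\Big),$$ where $\hat\lambda=\hat\lambda(\theta)$ is such that $n^{-1}\sum_i\exp(\hat\lambda'g_i)g_i=0$. Moreover, the first-order conditions for $\hat\theta_{\mathrm{ETEL}}$ can be written as $$n^{-1}\sum_i(1-n\hat w_i)\frac{d(\hat\lambda'g_i)}{d\theta'}=0,$$ where the total derivative indicates that $\hat\lambda=\hat\lambda(\theta)$ is allowed to vary with $\theta$, and $\hat w_i=\exp(\hat\lambda'g_i)/\sum_j\exp(\hat\lambda'g_j)$.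
   Context: The ETEL estimator is defined by $\hat\theta=\arg\min_\theta n^{-1}\sum_i\big(-\ln(n\hat w_i(\theta))\big)$, where $(\hat w_i(\theta))_{i=1}^n$ solves $\min_{w_1,\dots,w_n} n^{-1}\sum_i nw_i\ln(nw_i)$ subject to $\sum_i w_i g(x_i,\theta)=0$ and $\sum_i w_i=1$. Equivalently (dual form), $\hat w_i(\theta)=\exp(\hat\lambda(\theta)'g(x_i,\theta))/\sum_j\exp(\hat\lambda(\theta)'g(x_j,\theta))$ with $\hat\lambda(\theta)=\arg\max_{\lambda\in\mathbb{R}^{N_g}} n^{-1}\sum_i\big(-\exp(\lambda'g(x_i,\theta))\big)$. *)

(* Defs.v *)
From mathcomp Require Import all_boot all_order all_algebra.
From mathcomp Require Import all_classical all_reals all_analysis.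
Set Implicit Arguments. Unset Strict Implicit. Unset Printing Implicit Defensive.
Import Order.TTheory GRing.Theory Num.Theory.
Import numFieldNormedType.Exports.
Local Open Scope ring_scope.

Definition dotv (R : ringType) (k : nat) (a b : 'rV[R]_k) : R := (a *m b^T) 0 0.

Section ETELDefs.
Variables (R : realType) (X : Type) (n Ng Nt : nat).
Variables (x : 'I_n -> X) (g : X -> 'rV[R]_Nt -> 'rV[R]_Ng).

Definition gbar (th : 'rV[R]_Nt) : 'rV[R]_Ng := n%:R^-1 *: \sum_(i < n) g (x i) th.

Definition dual_obj (th : 'rV[R]_Nt) (l : 'rV[R]_Ng) : R :=
  n%:R^-1 * \sum_(i < n) - expR (dotv l (g (x i) th)).

Definition is_lamhat (th : 'rV[R]_Nt) (l : 'rV[R]_Ng) : Prop :=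
  forall l' : 'rV[R]_Ng, dual_obj th l' <= dual_obj th l.

Definition what (lam : 'rV[R]_Nt -> 'rV[R]_Ng) (th : 'rV[R]_Nt) (i : 'I_n) : R :=
  expR (dotv (lam th) (g (x i) th)) /
  \sum_(j < n) expR (dotv (lam th) (g (x j) th)).

Definition etel_obj (lam : 'rV[R]_Nt -> 'rV[R]_Ng) (th : 'rV[R]_Nt) : R :=
  n%:R^-1 * \sum_(i < n) - ln (n%:R * what lam th i).

Definition lnLhat (lam : 'rV[R]_Nt -> 'rV[R]_Ng) (th : 'rV[R]_Nt) : R :=
  - ln (n%:R^-1 * \sum_(i < n) expR (dotv (lam th) (g (x i) th - gbar th))).

End ETELDefs.

(* Main.v *)
Require Import Defs.
From mathcomp Require Import all_boot all_order all_algebra.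
From mathcomp Require Import all_classical all_reals all_analysis.
Import Order.TTheory GRing.Theory Num.Theory.
Import numFieldNormedType.Exports.
Local Open Scope classical_set_scope.
Local Open Scope ring_scope.
From mathcomp.algebra_tactics Require Import ring lra.
Set Implicit Arguments. Unset Strict Implicit.

Section Helpers.
Variable R : realType.

Lemma dotvE k (l b : 'rV[R]_k) : dotv l b = \sum_(j < k) l 0 j * b 0 j.
Proof. by rewrite /dotv !mxE; apply: eq_bigr => j _; rewrite mxE. Qed.

Lemma dotvB k (l b c : 'rV[R]_k) : dotv l (b - c) = dotv l b - dotv l c.
Proof.
rewrite !dotvE -sumrB; apply: eq_bigr => j _; by rewrite !mxE mulrBr.
Qed.

Lemma dotvZ k (l b : 'rV[R]_k) a : dotv l (a *: b) = a * dotv l b.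
Proof.
rewrite !dotvE mulr_sumr; apply: eq_bigr => j _; by rewrite !mxE mulrCA.
Qed.

Lemma dotvDl k (l m b : 'rV[R]_k) : dotv (l + m) b = dotv l b + dotv m b.
Proof.
rewrite !dotvE -big_split; apply: eq_bigr => j _; by rewrite !mxE mulrDl.
Qed.

Lemma dotvZl k (l b : 'rV[R]_k) a : dotv (a *: l) b = a * dotv l b.
Proof.
rewrite !dotvE mulr_sumr; apply: eq_bigr => j _; by rewrite !mxE mulrA.
Qed.

Lemma dotv_sum k n (l : 'rV[R]_k) (b : 'I_n -> 'rV[R]_k) :
  dotv l (\sum_(i < n) b i) = \sum_(i < n) dotv l (b i).
Proof.
rewrite dotvE (eq_bigr (fun j => \sum_(i < n) l 0 j * b i 0 j)).
  by rewrite exchange_big; apply: eq_bigr => i _; rewrite dotvE.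
by move=> j _; rewrite summxE mulr_sumr.
Qed.

Lemma is_derive_line (V : normedModType R) (f : V -> R) a v df :
  is_derive a v f df -> is_derive (0:R) (1:R) (fun h : R => f (h *: v + a)) df.
Proof.
case=> Hd Hdf; apply: DeriveDef; first exact: (derivable1P f a v).1 Hd.
rewrite -Hdf /derive; do 2 f_equal; apply/funext => h /=.
by rewrite addr0 scale0r add0r [_%:A]mulr1.
Qed.

Lemma is_derive_line_inv (V : normedModType R) (f : V -> R) a v df :
  is_derive (0:R) (1:R) (fun h : R => f (h *: v + a)) df -> is_derive a v f df.
Proof.
case=> Hd Hdf; apply: DeriveDef; first exact: (derivable1P f a v).2 Hd.
rewrite -Hdf /derive; do 2 f_equal; apply/funext => h /=.
by rewrite addr0 scale0r add0r [_%:A]mulr1.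
Qed.

Lemma is_derive_comp1 (V : normedModType R) (f : V -> R) (g : R -> R) a v df dg :
  is_derive a v f df -> is_derive (f a) 1 g dg -> is_derive a v (g \o f) (dg * df).
Proof.
move=> Hf Hg; apply: is_derive_line_inv.
have Hl := is_derive_line Hf.
have Hg' : is_derive ((fun h : R => f (h *: v + a)) 0) 1 g dg.
  by rewrite /= scale0r add0r.
exact: (is_derive1_comp Hg' Hl).
Qed.


Lemma locmax1 (f : R -> R) df : is_derive (0:R) (1:R) f df ->
  (\forall h \near (0:R), f h <= f 0) -> df = 0.
Proof.
move=> [fd <-] Hn.
move: Hn => /nbhs_ballP [e /= e0 He].
apply/eqP; rewrite eq_le; apply/andP; split.
  rewrite ['D_1 f 0]cvg_at_rightE; last exact: fd.
  apply: limr_le.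
    rewrite -(cvg_at_rightE (fun h : R => h^-1 *: ((f \o shift 0) _ - f 0))) //.
    apply: cvg_trans fd; apply: cvg_app.
    move=> A [d dgt0 Ad]; exists d => // x xe xgt0; apply: Ad => //.
    exact/lt0r_neq0.
  near=> h; apply: mulr_ge0_le0.
    by rewrite invr_ge0; apply: ltW; near: h; exists 1 => /=.
  rewrite subr_le0 [_%:A]mulr1; near: h.
  exists e => // h hb hpos; apply: He; by rewrite /shift addr0.
rewrite ['D_1 f 0]cvg_at_leftE; last exact: fd.
apply: limr_ge.
  rewrite -(cvg_at_leftE (fun h => h^-1 *: ((f \o shift 0) _ - f 0))) //.
  apply: cvg_trans fd; apply: cvg_app.
  move=> A [d dgt0 Ad]; exists d => // x xe xgt0; apply: Ad => //.
  exact/ltr0_neq0.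
near=> h; apply: mulr_le0.
  by rewrite invr_le0; apply: ltW; near: h; exists 1 => /=.
rewrite subr_le0 [_%:A]mulr1; near: h.
exists e => // h hb hpos; apply: He; by rewrite /shift addr0.
Unshelve. all: by end_near. Qed.

Lemma is_derive_locmax (V : normedModType R) (f : V -> R) a v df :
  is_derive a v f df -> (\forall t \near a, f t <= f a) -> df = 0.
Proof.
move=> Hd Hn; apply: (locmax1 (is_derive_line Hd)).
have Hc : (fun h : R => h *: v + a) @ (0:R) --> a.
  rewrite -[X in _ --> X]add0r -[X in X + a](scale0r v).
  apply: cvgD; [exact: scalel_continuous | exact: cvg_cst].
rewrite scale0r add0r; exact: Hc _ Hn.
Qed.

Lemma derivable_dot Nt Ng (L B : 'rV[R]_Nt -> 'rV[R]_Ng) th v :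
  differentiable L th -> differentiable B th ->
  derivable (fun t => dotv (L t) (B t)) th v.
Proof.
move=> dL dB.
have -> : (fun t => dotv (L t) (B t)) = \sum_(j < Ng) (fun t => L t 0 j * B t 0 j).
  by apply/funext => t; rewrite fct_sumE dotvE.
apply: derivable_sum => j.
apply: derivableM.
  exact: ((derivable_mxP L th v).1 (@diff_derivable _ _ _ L th v dL) 0 j).
exact: ((derivable_mxP B th v).1 (@diff_derivable _ _ _ B th v dB) 0 j).
Qed.

Lemma arith1 (k : nat) (a b A : R) : (0 < k)%N ->
  k%:R^-1 * - (a *+ k + (A - b *+ k)) = - (k%:R^-1 * A - b + a).
Proof.
move=> k0.
have hk : k%:R != 0 :> R by rewrite pnatr_eq0; case: k k0.
by rewrite -[a *+ k]mulr_natl -[b *+ k]mulr_natl mulrN mulrDr mulrBr !mulrA mulVf // !mul1r addrC.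
Qed.

Lemma arith2 (k : nat) (D e s : R) : (0 < k)%N ->
  k%:R^-1 * D - s^-1 * (e * D) = k%:R^-1 * ((1 - k%:R * (e / s)) * D).
Proof.
move=> k0.
have hk : k%:R != 0 :> R by rewrite pnatr_eq0; case: k k0.
move: (k%:R) hk => K hK.
rewrite mulrBl mul1r mulrBr; congr (_ - _).
by rewrite !mulrA mulVf // mul1r [s^-1 * e]mulrC.
Qed.

End Helpers.

Section Main.
Variables (R : realType) (X : Type) (n Ng Nt : nat).
Variables (x : 'I_n -> X) (g : X -> 'rV[R]_Nt -> 'rV[R]_Ng).
Variable (lam : 'rV[R]_Nt -> 'rV[R]_Ng).
Hypothesis n0 : (0 < n)%N.

Let u (i : 'I_n) t := dotv (lam t) (g (x i) t).
Let S t := \sum_(i < n) expR (u i t).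

Lemma S_gt0 t : 0 < S t.
Proof.
rewrite /S (bigD1 (Ordinal n0)) //=.
have h1 := expR_gt0 (u (Ordinal n0) t).
have h2 : 0 <= \sum_(i < n | i != Ordinal n0) expR (u i t).
  by apply: sumr_ge0 => i _; exact: expR_ge0.
lra.
Qed.

Lemma n_gt0 : 0 < n%:R :> R.
Proof. by rewrite ltr0n. Qed.

Lemma lnLhatE t :
  lnLhat x g lam t = n%:R^-1 * \sum_(i < n) u i t - ln (S t) + ln n%:R.
Proof.
rewrite /lnLhat /gbar.
under eq_bigr do rewrite dotvB dotvZ dotv_sum expRB.
rewrite -mulr_suml -/(S t).
set m := n%:R^-1 * _.
have hS := S_gt0 t; have hn := n_gt0.
rewrite lnM ?posrE ?invr_gt0 ?divr_gt0 ?expR_gt0 // ln_div ?posrE ?expR_gt0 //.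
rewrite expRK lnV ?posrE //.
rewrite /m.
set A := \sum_(i < n) dotv _ _.
change (\sum_(i < n) u i t) with A.
move: A (ln n%:R) (ln (S t)) (n%:R^-1) => A a b c.
by rewrite opprD opprK opprB addrC.
Qed.

Lemma etelE t : etel_obj x g lam t = - lnLhat x g lam t.
Proof.
rewrite lnLhatE /etel_obj /what.
have hS := S_gt0 t; have hn := n_gt0.
under eq_bigr => i _.
  rewrite -/(u i t) -/(S t) lnM ?posrE ?divr_gt0 ?expR_gt0 // ln_div ?posrE ?expR_gt0 //.
  rewrite expRK.
  over.
rewrite sumrN !big_split /= sumrN sumr_const sumr_const card_ord.
exact: arith1.
Qed.

Lemma is_derive_lnLhat th v : differentiable lam th ->
  (forall i, differentiable (g (x i)) th) ->
  is_derive th v (lnLhat x g lam)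
    (n%:R^-1 * \sum_(i < n) (1 - n%:R * what x g lam th i) * 'D_v (u i) th).
Proof.
move=> dl dg.
have du i : is_derive th v (u i) ('D_v (u i) th).
  exact: derivableP (derivable_dot (v:=v) dl (dg i)).
have H1 : is_derive th v (n%:R^-1 \*: \sum_(i < n) u i)
    (n%:R^-1 *: \sum_(i < n) 'D_v (u i) th).
  by apply: is_deriveZ; exact: is_derive_sum.
have Hs : is_derive th v (\sum_(i < n) (expR \o u i))
    (\sum_(i < n) (expR (u i th) * 'D_v (u i) th)).
  apply: is_derive_sum => i; exact: is_derive_comp1 (du i) (is_derive_expR _).
have Sp : 0 < (\sum_(i < n) (expR \o u i)) th.
  rewrite fct_sumE; exact: S_gt0.
have H2 := is_derive_comp1 Hs (is_derive1_ln Sp).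
have H := is_deriveD (is_deriveB H1 H2) (is_derive_cst (ln n%:R) th v).
have -> : lnLhat x g lam = (n%:R^-1 \*: \sum_(i < n) u i - ((@ln R) \o \sum_(i < n) (expR \o u i))
   + cst (ln n%:R)).
  apply/funext => t; rewrite lnLhatE /= !fct_sumE.
  done.
apply: is_derive_eq H _.
rewrite addr0 -[X in X - _]/(n%:R^-1 * _) !mulr_sumr -sumrB.
apply: eq_bigr => i _; rewrite fct_sumE /what; exact: arith2 n0.
Qed.

Lemma dotv_delta (k : 'I_Ng) (b : 'rV[R]_Ng) : dotv (delta_mx 0 k) b = b 0 k.
Proof.
rewrite dotvE (bigD1 k) //= !mxE !eqxx mul1r big1 ?addr0 // => j hj.
by rewrite !mxE (negbTE hj) andbF mul0r.
Qed.

Lemma dual_foc th l : is_lamhat x g th l ->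
  n%:R^-1 *: \sum_(i < n) (expR (dotv l (g (x i) th)) *: g (x i) th) = 0.
Proof.
move=> Hl; apply/rowP => k; rewrite !mxE summxE.
pose e : 'rV[R]_Ng := delta_mx 0 k.
pose a i := dotv l (g (x i) th).
pose c i := dotv e (g (x i) th).
pose phi := fun h : R => dual_obj x g th (h *: e + l).
have Hphi : phi = n%:R^-1 \*: \sum_(i < n) (- (expR \o (cst (a i) + c i \*: id))).
  apply/funext => h; rewrite /phi /dual_obj /= fct_sumE.
  congr (_ * _); apply: eq_bigr => i _.
  by rewrite /= dotvDl dotvZl addrC mulrC.
have Hd : is_derive (0:R) (1:R) phi
   (n%:R^-1 *: \sum_(i < n) - (expR (a i + c i * 0) * (0 + c i *: 1))).
  rewrite Hphi; apply: is_deriveZ; apply: is_derive_sum => i.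
have := locmax1 Hd.
have Hm : \forall h \near (0:R), phi h <= phi 0.
  by apply: filterE => h; rewrite /phi scale0r add0r; exact: Hl.
move=> /(_ Hm).
under eq_bigr do rewrite mulr0 addr0 add0r [_%:A]mulr1.
rewrite sumrN -[X in X = 0 -> _]/(n%:R^-1 * _) => /eqP.
rewrite mulf_eq0 invr_eq0 pnatr_eq0 oppr_eq0 => /orP [hn|/eqP H].
  by move: n0; rewrite lt0n hn.
transitivity (n%:R^-1 * \sum_i expR (a i) * c i); last by rewrite H mulr0.
congr (_ * _); apply: eq_bigr => i _; by rewrite mxE /c dotv_delta.
Qed.

End Main.

Unset Implicit Arguments.

Theorem theorem2 (R : realType) (X : Type) (n Ng Nt : nat) (x : 'I_n -> X)
  (g : X -> 'rV[R]_Nt -> 'rV[R]_Ng) (Theta : set 'rV[R]_Nt)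
  (lam : 'rV[R]_Nt -> 'rV[R]_Ng) :
  (0 < n)%N ->
  (forall th, Theta th -> is_lamhat x g th (lam th)) ->
  [/\ (* lambda-hat solves n^-1 sum_i exp(lambda'g_i) g_i = 0 *)
      (forall th, Theta th ->
         n%:R^-1 *: \sum_(i < n) (expR (dotv (lam th) (g (x i) th)) *: g (x i) th) = 0),
      (* theta-hat is an ETEL estimator iff it maximizes ln Lhat over Theta *)
      (forall th_hat,
         (Theta th_hat /\ forall th, Theta th -> etel_obj x g lam th_hat <= etel_obj x g lam th)
         <->
         (Theta th_hat /\ forall th, Theta th -> lnLhat x g lam th <= lnLhat x g lam th_hat)),
      (* the derivative of ln Lhat is n^-1 sum_i (1 - n w_i) d(lambda'g_i)/dtheta *)
      (forall th, nbhs th Theta -> differentiable lam th ->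
         (forall i, differentiable (g (x i)) th) ->
         forall v : 'rV[R]_Nt,
           'D_v (lnLhat x g lam) th =
           n%:R^-1 * \sum_(i < n) (1 - n%:R * what x g lam th i) *
                       'D_v (fun t => dotv (lam t) (g (x i) t)) th) &
      (* first-order conditions at an interior maximizer *)
      (forall th_hat, nbhs th_hat Theta ->
         (forall th, Theta th -> lnLhat x g lam th <= lnLhat x g lam th_hat) ->
         differentiable lam th_hat ->
         (forall i, differentiable (g (x i)) th_hat) ->
         forall v : 'rV[R]_Nt,
           n%:R^-1 * \sum_(i < n) (1 - n%:R * what x g lam th_hat i) *
                       'D_v (fun t => dotv (lam t) (g (x i) t)) th_hat = 0)].

Proof.
move=> n0 Hlam; split.
- move=> th Th. have H := dual_foc n0 (Hlam th Th). exact H.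
- move=> th_hat. split.
    move=> -[T H]. split. done. move=> th Th.
    move: (H th Th). rewrite !(etelE x g lam n0). rewrite lerN2. done.
  move=> -[T H]. split. done. move=> th Th.
  rewrite !(etelE x g lam n0). rewrite lerN2. exact: (H th Th).
- move=> th _ dl dg v.
  have [_ ->] := is_derive_lnLhat n0 v dl dg. done.
- move=> th_hat Hn Hmax dl dg v.
  apply: (is_derive_locmax (is_derive_lnLhat n0 v dl dg)).
  apply: filterS Hn => t Tt. exact: Hmax.
Qed.
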